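(* The module $\varphi(M_{s,\ell})$ is generated as an $\mathbb F_q[X]$-module by the $\ell+1$ polynomials $\bar P^{(t)}(X,Y)=\bar G(X)^{s-t}(Y-\bar R(X))^t$ for $0\le t<s$ and $\bar P^{(t)}(X,Y)=(L(X)Y)^{t-s}(Y-\bar R(X))^s$ for $s\le t\le\ell$.
   Context: Let $\mathbb F_q$ be a finite field, $1\le k<n<q$, $\alpha_0,\dots,\alpha_{n-1}$ distinct nonzero elements of $\mathbb F_q$, $w_0,\dots,w_{n-1}$ nonzero elements of $\mathbb F_q$, and $r\in\mathbb F_q^n$ a word with $r_i=0$ for $i=0,\dots,k-1$; let $r_i'=r_i/w_i$. Let $G(X)=\prod_{i=0}^{n-1}(X-\alpha_i)$, $R(X)$ the unique polynomial of degree $<n$ with $R(\alpha_i)=r_i'$, $L(X)=\prod_{i=0}^{k-1}(X-\alpha_i)$, $\bar G=G/L$ and $\bar R=R/L$ (both polynomials). For positive integers $s\le\ell$, $M_{s,\ell}$ is the $\mathbb F_q[X]$-module of all $Q\in\mathbb F_q[X,Y]$ of $Y$-degree at most $\ell$ such that for each $i$, $Q(X+\alpha_i,Y+r_i')$ has no monomials of total degree less than $s$. Define $\varphi(Q)(X,Y)=L(X)^{-s}Q(X,L(X)Y)$ for $Q\in M_{s,\ell}$ (this lies in $\mathbb F_q[X,Y]$), and let $\varphi(M_{s,\ell})$ be the image. *)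

(* Defs.v *)
From HB Require Import structures.
From mathcomp Require Import all_boot all_order all_algebra all_field.
Set Implicit Arguments. Unset Strict Implicit. Unset Printing Implicit Defensive.
Import GRing.Theory.
Local Open Scope ring_scope.

(* Bivariate polynomials over F are {poly {poly F}}: the outer variable is Y,
   the inner one is X, i.e. Q = \sum_j Q`_j(X) Y^j. *)

(* Q(X + a, Y + b) *)
Definition shiftXY (F : fieldType) (a b : F) (Q : {poly {poly F}}) : {poly {poly F}} :=
  (map_poly (fun p : {poly F} => p \Po ('X + a%:P)) Q) \Po ('X + (b%:P)%:P).

Definition no_low_monomials (F : fieldType) (s : nat) (Q : {poly {poly F}}) : Prop :=
  forall i j : nat, (i + j < s)%N -> (Q`_j)`_i = 0.

Definition in_M (F : fieldType) (n s l : nat) (alpha r' : 'I_n -> F)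
  (Q : {poly {poly F}}) : Prop :=
  (size Q <= l.+1)%N /\
  forall i : 'I_n, @no_low_monomials F s (shiftXY (alpha i) (r' i) Q).

Definition substLY (F : fieldType) (L : {poly F}) (Q : {poly {poly F}}) : {poly {poly F}} :=
  Q \Po (L%:P * 'X).

(* P \in phi(M_{s,l}) : P = L^{-s} Q(X, L Y) for some Q in M_{s,l} *)
Definition in_phiM (F : fieldType) (n s l : nat) (alpha r' : 'I_n -> F)
  (L : {poly F}) (P : {poly {poly F}}) : Prop :=
  exists Q, @in_M F n s l alpha r' Q /\ (L ^+ s)%:P * P = substLY L Q.

Definition Pbar (F : fieldType) (s : nat) (L Gb Rb : {poly F}) (t : nat) : {poly {poly F}} :=
  if (t < s)%N then (Gb ^+ (s - t))%:P * ('X - Rb%:P) ^+ t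
  else (L%:P * 'X) ^+ (t - s) * ('X - Rb%:P) ^+ s.

(* Main.v *)
Require Import Defs.
From HB Require Import structures.
From mathcomp Require Import all_boot all_order all_algebra all_field.
From mathcomp Require Import zify ring.
Set Implicit Arguments. Unset Strict Implicit. Unset Printing Implicit Defensive.
Import GRing.Theory.
Local Open Scope ring_scope.

Section NLM.
Variable F : fieldType.
Notation nlm := (@no_low_monomials F).
Implicit Types A B : {poly {poly F}}.

Lemma nlm0s A : nlm 0 A.
Proof. by move=> i j. Qed.

Lemma nlm_le a b A : (b <= a)%N -> nlm a A -> nlm b A.
Proof. move=> hba hA i j h; apply: hA; lia. Qed.

Lemma nlm_mul a b A B : nlm a A -> nlm b B -> nlm (a + b) (A * B).
Proof.
move=> hA hB i j hij.
rewrite coefM coef_sum big1 // => j1 _.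
rewrite coefM big1 // => i1 _.
case: (ltnP (i1 + j1) a) => h1.
  by rewrite hA // mul0r.
rewrite hB ?mulr0 //.
have := ltn_ord i1; have := ltn_ord j1; lia.
Qed.

Lemma nlm_add a A B : nlm a A -> nlm a B -> nlm a (A + B).
Proof. by move=> hA hB i j h; rewrite !coefD hA ?hB ?addr0. Qed.

Lemma nlm_0 a : nlm a 0.
Proof. by move=> i j h; rewrite !coef0. Qed.

Lemma nlm_sum a (I : Type) (rr : seq I) (P : pred I) (f : I -> {poly {poly F}}) :
  (forall i, P i -> nlm a (f i)) -> nlm a (\sum_(i <- rr | P i) f i).
Proof.
move=> h; apply: (big_ind (nlm a)) => //; [exact: nlm_0| exact: nlm_add].
Qed.

Lemma nlm_exp a A m : nlm a A -> nlm (a * m) (A ^+ m).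
Proof.
move=> hA; elim: m => [|m IH]; first by rewrite muln0; exact: nlm0s.
by rewrite exprS mulnS; apply: nlm_mul.
Qed.

Lemma nlm_C m (c : {poly F}) : (forall i, (i < m)%N -> c`_i = 0) -> nlm m c%:P.
Proof.
move=> hc i j h; rewrite coefC; case: (j =P 0%N) => [hj|]; last by rewrite coef0.
by apply: hc; lia.
Qed.

Lemma nlm_XaddC (c : {poly F}) : c`_0 = 0 -> nlm 1 ('X + c%:P).
Proof.
move=> hc i j h; rewrite coefD coefX coefC.
have -> : i = 0%N by lia.
have -> : j = 0%N by lia.
by rewrite /= add0r.
Qed.

Lemma nlm_comp s A B : nlm s A -> nlm 1 B -> nlm s (A \Po B).
Proof.
move=> hA hB; rewrite comp_polyE; apply: nlm_sum => i _.
rewrite -mul_polyC.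
apply: (@nlm_le ((s - i) + 1 * i)); first lia.
apply: nlm_mul; last exact: nlm_exp.
apply: nlm_C => idx hidx; apply: hA; lia.
Qed.

End NLM.
Section Sh.
Variable F : fieldType.
Implicit Types A B : {poly {poly F}}.
Implicit Types (a b : F) (c : {poly F}).

Lemma shiftXY_M a b A B : shiftXY a b (A * B) = shiftXY a b A * shiftXY a b B.
Proof.
rewrite /shiftXY.
have -> : (fun p : {poly F} => p \Po ('X + a%:P)) = comp_poly ('X + a%:P) by [].
by rewrite rmorphM /= comp_polyM.
Qed.

Lemma shiftXY_D a b A B : shiftXY a b (A + B) = shiftXY a b A + shiftXY a b B.
Proof.
rewrite /shiftXY.
have -> : (fun p : {poly F} => p \Po ('X + a%:P)) = comp_poly ('X + a%:P) by [].
by rewrite rmorphD /= comp_polyD.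
Qed.

Lemma shiftXY_C a b c : shiftXY a b (c%:P) = (c \Po ('X + a%:P))%:P.
Proof. by rewrite /shiftXY map_polyC comp_polyC. Qed.

Lemma shiftXY_1 a b : shiftXY a b 1 = 1.
Proof. by rewrite shiftXY_C comp_polyC. Qed.

Lemma shiftXY_X a b : shiftXY a b 'X = 'X + (b%:P)%:P.
Proof. by rewrite /shiftXY map_polyX comp_polyX. Qed.

Lemma shiftXY_exp a b A m : shiftXY a b (A ^+ m) = (shiftXY a b A) ^+ m.
Proof.
elim: m => [|m IH]; first by rewrite !expr0 shiftXY_1.
by rewrite !exprS shiftXY_M IH.
Qed.

Lemma shiftXY_XsubC a b (R : {poly F}) :
  shiftXY a b ('X - R%:P) = 'X + (b%:P - (R \Po ('X + a%:P)))%:P.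
Proof.
rewrite /shiftXY rmorphB /= map_polyX map_polyC /= comp_polyB comp_polyX comp_polyC.
by rewrite rmorphB addrA.
Qed.

Lemma nlm_shift_XsubC a b (R : {poly F}) : R.[a] = b ->
  no_low_monomials 1 (shiftXY a b ('X - R%:P)).
Proof.
move=> hR; rewrite shiftXY_XsubC.
move=> i j h; rewrite coefD coefX coefC.
have -> : i = 0%N by lia.
have -> : j = 0%N by lia.
rewrite /= add0r coefB coefC /= -horner_coef0 horner_comp !hornerE hR.
by rewrite subrr.
Qed.

Lemma nlm_shift_C a b (G : {poly F}) : G.[a] = 0 ->
  no_low_monomials 1 (shiftXY a b G%:P).
Proof.
move=> hG; rewrite shiftXY_C; move=> i j h; rewrite coefC.
have -> : i = 0%N by lia.
have -> : j = 0%N by lia.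
by rewrite /= -horner_coef0 horner_comp !hornerE hG.
Qed.

Lemma dvd_shift m a (p : {poly F}) :
  (forall i, (i < m)%N -> (p \Po ('X + a%:P))`_i = 0) -> ('X - a%:P) ^+ m %| p.
Proof.
move=> h.
set u := p \Po ('X + a%:P).
have hu : u = drop_poly m u * 'X^m.
  rewrite -{1}(poly_take_drop m u).
  suff -> : take_poly m u = 0 by rewrite add0r.
  by apply/polyP => i; rewrite coef_take_poly coef0; case: ifP => // /h.
have -> : p = u \Po ('X - a%:P) by rewrite comp_polyXaddC_K.
rewrite hu comp_polyM rmorphXn /= comp_polyX.
exact: dvdp_mull.
Qed.

Lemma dvd_prod_seq m (rs : seq F) (p : {poly F}) : uniq rs ->
  (forall a, a \in rs -> ('X - a%:P) ^+ m %| p) ->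
  \prod_(a <- rs) ('X - a%:P) ^+ m %| p.
Proof.
elim: rs => [|a rs IH] /=; first by rewrite big_nil dvd1p.
move=> /andP [ars urs] h.
rewrite big_cons Gauss_dvdp; last first.
  apply: coprimep_expl; rewrite coprimep_sym coprimep_XsubC rootE horner_prod.
  rewrite prodf_seq_neq0; apply/allP => b hb /=.
  rewrite !hornerE expf_neq0 // subr_eq0.
  by apply: contraNneq ars => ->.
rewrite h ?mem_head //= IH // => b hb; apply: h; rewrite inE hb orbT //.
Qed.

End Sh.
Section Main.
Variable F : fieldType.
Implicit Types (a b : F) (T B : {poly {poly F}}).

Definition Pun (s : nat) (G R : {poly F}) (t : nat) : {poly {poly F}} :=
  if (t < s)%N then (G ^+ (s - t))%:P * ('X - R%:P) ^+ t
  else 'X ^+ (t - s) * ('X - R%:P) ^+ s.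

Lemma substLY_Pun s t (L Gb Rb G R : {poly F}) : G = Gb * L -> R = Rb * L ->
  Pun s G R t \Po (L%:P * 'X) = (L ^+ s)%:P * Pbar s L Gb Rb t.
Proof.
move=> -> ->; rewrite /Pun /Pbar.
have eX : ('X - (Rb * L)%:P) \Po (L%:P * 'X) = L%:P * ('X - Rb%:P).
  by rewrite comp_polyB comp_polyX comp_polyC rmorphM /=; ring.
case: ifP => ht; rewrite comp_polyM ?comp_polyC !rmorphXn /= eX ?comp_polyX.
  rewrite rmorphM /= !exprMn.
  have -> : (L%:P : {poly {poly F}}) ^+ s = L%:P ^+ (s - t) * L%:P ^+ t.
    by rewrite -exprD subnK // ltnW.
  ring.
by rewrite !exprMn; ring.
Qed.

Lemma size_Pun s G R t : (size (Pun s G R t) <= t.+1)%N.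
Proof.
rewrite /Pun; case: ifP => ht.
  apply: (leq_trans (size_mul_leq _ _)).
  have := size_polyC_leq1 (G ^+ (s - t)); rewrite size_exp_XsubC; move=> h; by rewrite addnS /= -add1n leq_add2r.
apply: (leq_trans (size_mul_leq _ _)); rewrite size_exp_XsubC size_polyXn.
move/negbT: ht; rewrite -subn1; lia.
Qed.

Lemma shiftXY_comp a b T B :
  shiftXY a b (T \Po B) = map_poly (comp_poly ('X + a%:P)) T \Po shiftXY a b B.
Proof. by rewrite /shiftXY map_comp_poly -comp_polyA. Qed.

Lemma shiftXY_sum a b (I : Type) (rr : seq I) (f : I -> {poly {poly F}}) :
  shiftXY a b (\sum_(i <- rr) f i) = \sum_(i <- rr) shiftXY a b (f i).
Proof.
apply: (big_morph _ (@shiftXY_D F a b)).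
by rewrite shiftXY_C comp_poly0.
Qed.

End Main.

Lemma nlm_shift_Pun (F : fieldType) a b s (G R : {poly F}) t : R.[a] = b -> G.[a] = 0 ->
  no_low_monomials s (shiftXY a b (Pun s G R t)).
Proof.
move=> hR hG; rewrite /Pun; case: ifP => ht; rewrite shiftXY_M ?rmorphXn /= !shiftXY_exp.
  apply: (@nlm_le _ (1 * (s - t) + 1 * t)); first lia.
  apply: nlm_mul; apply: nlm_exp; [exact: nlm_shift_C | exact: nlm_shift_XsubC].
apply: (@nlm_le _ (0 + 1 * s)); first lia.
apply: nlm_mul; [exact: nlm0s | apply: nlm_exp; exact: nlm_shift_XsubC].
Qed.

Lemma prod_enum (F : fieldType) (I : finType) (P : pred I) (g : I -> F)
  (f : F -> {poly F}) :
  \prod_(i | P i) f (g i) = \prod_(x <- [seq g i | i <- enum P]) f x.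
Proof. by rewrite big_map big_enum. Qed.

Unset Implicit Arguments.
Set Strict Implicit.

Theorem theorem5 (F : finFieldType) (n k : nat)
  (alpha w r : 'I_n -> F) (R : {poly F}) (s l : nat) :
  (1 <= k)%N -> (k < n)%N -> (n < #|F|)%N ->
  injective alpha -> (forall i, alpha i != 0) ->
  (forall i, w i != 0) ->
  (forall i : 'I_n, (i < k)%N -> r i = 0) ->
  (size R <= n)%N -> (forall i, R.[alpha i] = r i / w i) ->
  (0 < s)%N -> (s <= l)%N ->
  let r' := fun i => r i / w i in
  let G := \prod_(i < n) ('X - (alpha i)%:P) in
  let L := \prod_(i < n | (i < k)%N) ('X - (alpha i)%:P) in
  let Gb := G %/ L in
  let Rb := R %/ L in
  forall P : {poly {poly F}},
    @in_phiM F n s l alpha r' L P <->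
    exists a : 'I_l.+1 -> {poly F},
      P = \sum_(t < l.+1) (a t)%:P * @Pbar F s L Gb Rb t.
Proof.
move=> hk hkn hnF ainj a0 w0 rk hszR Rev s0 sl r' G L Gb Rb P.
have hL0 : L != 0 by rewrite monic_neq0 // monic_prod_XsubC.
have hLs0 : (L ^+ s)%:P != 0 :> {poly {poly F}}.
  by rewrite polyC_eq0 expf_neq0.
have hGL : G = Gb * L.
  rewrite /Gb /G (bigID (fun i : 'I_n => (i < k)%N)) /= -/L mulrC mulpK //.
have hRL : R = Rb * L.
  rewrite /Rb divpK //.
  have -> : L = \prod_(x <- [seq alpha i | i <- enum (fun i : 'I_n => (i < k)%N)])
                 ('X - x%:P) ^+ 1.
    by rewrite /L (prod_enum (fun i : 'I_n => (i < k)%N) alpha (fun x => ('X - x%:P) ^+ 1)).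
  apply: dvd_prod_seq; first by rewrite map_inj_uniq ?enum_uniq.
  move=> x /mapP [i]; rewrite mem_enum => hi ->.
  by rewrite expr1 dvdp_XsubCl /root Rev rk // mul0r.
have Gev : forall i, G.[alpha i] = 0.
  move=> j; rewrite /G horner_prod; apply/eqP/prodf_eq0.
  by exists j => //; rewrite !hornerE subrr.
split.
-
  move=> [Q [[hsz hnlm] hP]].
  set T := Q \Po ('X + R%:P).
  have hQT : Q = T \Po ('X - R%:P) by rewrite comp_polyXaddC_K.
  have hszT : (size T <= l.+1)%N.
    apply: (leq_trans (size_comp_poly_leq _ _)).
    rewrite size_XaddC muln1; by case: (size Q) hsz.
  have key : forall i : 'I_n,
      no_low_monomials s (map_poly (comp_poly ('X + (alpha i)%:P)) T).
    move=> i.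
    set z := (r' i)%:P - (R \Po ('X + (alpha i)%:P)).
    have e : shiftXY (alpha i) (r' i) Q =
        map_poly (comp_poly ('X + (alpha i)%:P)) T \Po ('X + z%:P).
      by rewrite hQT shiftXY_comp shiftXY_XsubC.
    have -> : map_poly (comp_poly ('X + (alpha i)%:P)) T =
        shiftXY (alpha i) (r' i) Q \Po ('X + (- z)%:P).
      by rewrite e polyCN comp_polyXaddC_K.
    apply: nlm_comp; first exact: hnlm.
    apply: nlm_XaddC.
    rewrite coefN /z coefB coefC /= -horner_coef0 horner_comp !hornerE Rev.
    by rewrite subrr oppr0.
  have hdiv : forall t, (t < s)%N -> G ^+ (s - t) %| T`_t.
    move=> t ht.
    have -> : G ^+ (s - t) = \prod_(x <- [seq alpha i | i <- enum (fun _ : 'I_n => true)])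
                 ('X - x%:P) ^+ (s - t).
      rewrite -(prod_enum (fun _ : 'I_n => true) alpha (fun x => ('X - x%:P) ^+ (s - t))).
      by rewrite prodrXl.
    apply: dvd_prod_seq; first by rewrite map_inj_uniq ?enum_uniq.
    move=> x /mapP [i _ ->]; apply: dvd_shift => idx hidx.
    have := key i idx t; rewrite coef_map /=; apply; lia.
  set E := drop_poly s T \Po ('X - R%:P).
  have hszE : (size E <= l.+1 - s)%N.
    apply: (leq_trans (size_comp_poly_leq _ _)); rewrite size_XsubC muln1 size_drop_poly.
    move: (size T) hszT => m hm.
    case e: (m - s)%N => [|j] /=; lia.
  pose aa := fun t : nat => if (t < s)%N then T`_t %/ G ^+ (s - t) else E`_(t - s).
  exists (fun t : 'I_l.+1 => aa t).
  have hQsum : Q = \sum_(t < l.+1) (aa t)%:P * Pun s G R t.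
    rewrite -(big_mkord xpredT (fun t => (aa t)%:P * Pun s G R t)).
    rewrite (big_cat_nat _ (n:=s)) //=; last exact: leqW.
    rewrite hQT -{1}(poly_take_drop s T) comp_polyD comp_polyM -/E.
    rewrite rmorphXn /= comp_polyX.
    congr (_ + _).
      rewrite /take_poly poly_def raddf_sum /= big_mkord; apply: eq_bigr => i _.
      rewrite comp_polyZ rmorphXn /= comp_polyX /aa /Pun ltn_ord -mul_polyC mulrA.
      by rewrite -rmorphM /= divpK //; exact: hdiv.
    have := big_addn 0 l.+1 s xpredT (fun t => (aa t)%:P * Pun s G R t).
    rewrite add0n => ->; rewrite big_mkord.
    rewrite -[E in LHS](take_poly_id hszE) /take_poly poly_def mulr_suml.
    apply: eq_bigr => i _.
    rewrite /aa /Pun ltnNge leq_addl /= addnK -mul_polyC mulrA.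
    done.
  apply: (mulfI hLs0).
  rewrite hP hQsum /substLY raddf_sum mulr_sumr; apply: eq_bigr => t _.
  rewrite /= comp_polyM comp_polyC (substLY_Pun s t hGL hRL); ring.
- move=> [a ->].
  exists (\sum_(t < l.+1) (a t)%:P * Pun s G R t); split; first split.
  + apply: (big_ind (fun p : {poly {poly F}} => (size p <= l.+1)%N)).
    * by rewrite size_poly0.
    * move=> p q hp hq; apply: (leq_trans (size_polyD _ _)); by rewrite geq_max hp hq.
    * move=> t _; apply: (leq_trans (size_mul_leq _ _)).
      have := size_polyC_leq1 (a t); have := size_Pun s G R t; have := ltn_ord t.
      move: (size _) (size _) => x y h1 h2 h3; rewrite -subn1; lia.
  + move=> i; rewrite shiftXY_sum; apply: nlm_sum => t _.
    rewrite shiftXY_M; apply: (@nlm_le _ (0 + s)) => //.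
    apply: nlm_mul; first exact: nlm0s.
    by apply: nlm_shift_Pun; rewrite ?Rev.
  + rewrite /substLY raddf_sum mulr_sumr /=; apply: eq_bigr => t _.
    rewrite /= comp_polyM comp_polyC (substLY_Pun s t hGL hRL); ring.
Qed.
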